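(* Let $G=\langle A\cup B\rangle$ be a CS group with abelian periodic rooted group $A$ such that either (i) $A$ has finite exponent, or (ii) $B$ has finite support. Then $G$ is periodic if and only if for every $b\in B$ the map $\lambda_b:A\to A$ is eventually trivial, i.e. for every $a\in A$ there is $n\in\mathbb N$ with $\lambda_b^n(a)=1_A$.
   Context: Let $X$ be a nonempty set (possibly infinite) with distinguished letter $0$, $\dot X=X\setminus\{0\}$. $X^*$ is the free monoid on $X$ viewed as a rooted tree; $\mathrm{Aut}(X^* )$ acts on the right; sections $g|_u$ are defined by $(u\star v).g=u.g\star v.(g|_u)$; elements of $\mathrm{Sym}(X)$ are identified with rooted automorphisms; $\mathrm{St}(1)$ is the first layer stabiliser. A constant spinal (CS) group is $G=\langle A\cup B\rangle$ with $A\le\mathrm{Sym}(X)$ transitive (rooted group) and $B\le\mathrm{St}(1)$ (directed group) such that $b|_0=b$ for all $b\in B$ and the elements $b|_x$ ($b\in B$, $x\in\dot X$) lie in $A$ and generate $A$. $B$ has finite support if each $b\in B$ has $b|_x=\mathrm{id}$ for all but finitely many $x$. For $a\in A$ let $\ell_a(0)$ be the length of the $\langle a\rangle$-orbit of $0$, and for $b\in B$ let $\lambda_b(a)=b|_{0.a}\,b|_{0.a^2}\cdots b|_{0.a^{\ell_a(0)-1}}$. A group is periodic if every element has finite order. *)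

(* Defs.v *)
From Stdlib Require Import ClassicalEpsilon.
From mathcomp Require Import all_boot.
Set Implicit Arguments. Unset Strict Implicit. Unset Printing Implicit Defensive.

Section TreeAut.
Variable X : eqType.

(* Maps of the rooted tree X^* (words = seq X); automorphisms act on the right. *)
Definition tfun := seq X -> seq X.

Definition tid : tfun := fun w => w.

Definition mul (g h : tfun) : tfun := fun w => h (g w).

Definition pow (g : tfun) (n : nat) : tfun := fun w => iter n g w.

Definition is_aut (g : tfun) : Prop :=
  (exists g' : tfun, cancel g g' /\ cancel g' g) /\
  (forall w, size (g w) = size w) /\
  (forall u v, take (size u) (g (u ++ v)) = g u).

(* section g|_u, defined by (u v).g = (u.g) (v.(g|_u)) *)
Definition section (g : tfun) (u : seq X) : tfun :=
  fun v => drop (size u) (g (u ++ v)).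

Definition act1 (g : tfun) (x : X) : X := head x (g [:: x]).

Definition rooted (g : tfun) : Prop :=
  exists s : X -> X, g [::] = [::] /\ forall x v, g (x :: v) = s x :: v.

Definition stab1 (g : tfun) : Prop := forall x, g [:: x] = [:: x].

Definition subgroup (H : tfun -> Prop) : Prop :=
  (forall g, H g -> is_aut g) /\ H tid /\
  (forall g h, H g -> H h -> H (mul g h)) /\
  (forall g, H g -> exists g', H g' /\ mul g g' = tid /\ mul g' g = tid).

Inductive gen (S : tfun -> Prop) : tfun -> Prop :=
| gen1 : gen S tid
| genM g h : S g -> gen S h -> gen S (mul g h)
| genV g g' h : S g -> cancel g g' -> cancel g' g -> gen S h -> gen S (mul g' h).

Definition transitive_on_letters (A : tfun -> Prop) : Prop :=
  forall x y : X, exists a, A a /\ act1 a x = y.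

Definition CS_group (x0 : X) (A B : tfun -> Prop) : Prop :=
  [/\ subgroup A, (forall a, A a -> rooted a), transitive_on_letters A,
      subgroup B & (forall b, B b -> stab1 b)] /\
  [/\
      (forall b, B b -> section b [:: x0] = b),
      (forall b x, B b -> x != x0 -> A (section b [:: x])) &
      (forall a, A a ->
         gen (fun g => exists b x, [/\ B b, x != x0 & g = section b [:: x]]) a)].

Definition abelian_set (A : tfun -> Prop) : Prop :=
  forall a a', A a -> A a' -> mul a a' = mul a' a.

Definition periodic_set (H : tfun -> Prop) : Prop :=
  forall g, H g -> exists n, 0 < n /\ pow g n = tid.

Definition finite_exponent (H : tfun -> Prop) : Prop :=
  exists n, 0 < n /\ forall g, H g -> pow g n = tid.

Definition finite_support (x0 : X) (B : tfun -> Prop) : Prop :=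
  forall b, B b -> exists s : seq X,
    forall x, x != x0 -> x \notin s -> section b [:: x] = tid.

(* l_a(0): length of the <a>-orbit of x0 = least k > 0 with x0.a^k = x0
   (0 if no such k; never happens for periodic a) *)
Definition orbit_len (x0 : X) (a : tfun) : nat :=
  match excluded_middle_informative
          (exists k, (0 < k) && (act1 (pow a k) x0 == x0)) with
  | left h => ex_minn h
  | right _ => 0
  end.

Definition prodl (fs : seq tfun) : tfun := foldr mul tid fs.

Definition lambda (x0 : X) (b : tfun) (a : tfun) : tfun :=
  prodl [seq section b [:: act1 (pow a j) x0] | j <- iota 1 (orbit_len x0 a).-1].

End TreeAut.
Arguments tid {X} _.

(* Main.v *)
Require Import Defs.
From Stdlib Require Import ClassicalEpsilon FunctionalExtensionality.
From mathcomp Require Import all_boot zify.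
From Stdlib Require Import Lia.
Set Implicit Arguments. Unset Strict Implicit. Unset Printing Implicit Defensive.

Section Comm.
Variables (T : Type) (op : T -> T -> T) (e : T) (D : T -> Prop).
Hypothesis opA : forall x y z, op x (op y z) = op (op x y) z.
Hypothesis op1 : forall x, op e x = x.
Hypothesis opr1 : forall x, op x e = x.
Hypothesis opC : forall x y, D x -> D y -> op x y = op y x.
Hypothesis De : D e.
Hypothesis Dop : forall x y, D x -> D y -> D (op x y).

Definition allP (U : Type) (P : U -> Prop) (s : seq U) := forall y, List.In y s -> P y.

Lemma allP_cons U (P : U -> Prop) y s : allP P (y :: s) <-> P y /\ allP P s.
Proof.
split=> [H|[H1 H2] z [<-|Hz]] //; last by apply: H2.
by split; [apply: H; left|move=> z Hz; apply: H; right].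
Qed.

Lemma allP_map U V (f : U -> V) (P : V -> Prop) s :
  allP P (map f s) <-> allP (fun y => P (f y)) s.
Proof.
elim: s => [|y s IH] /=; first by split=> _ z [].
by rewrite !allP_cons IH.
Qed.

Lemma allP_cat U (P : U -> Prop) s t : allP P (s ++ t) <-> allP P s /\ allP P t.
Proof.
elim: s => [|y s IH] /=; first by split=> [H|[_ H]] //; split=> // z [].
by rewrite !allP_cons IH; tauto.
Qed.

Lemma allP_flatten U (P : U -> Prop) ss :
  allP P (flatten ss) <-> allP (allP P) ss.
Proof.
elim: ss => [|s ss IH] /=; first by split=> _ z [].
by rewrite allP_cat allP_cons IH.
Qed.

Lemma allP_imp U (P Q : U -> Prop) s : (forall y, P y -> Q y) -> allP P s -> allP Q s.
Proof. by move=> H H1 y Hy; apply/H/H1. Qed.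

Lemma fprod_D s : allP D s -> D (foldr op e s).
Proof.
elim: s => [|y s IH] //= /allP_cons [H1 H2]; exact: Dop (IH H2).
Qed.

Lemma fprod_cat s t : foldr op e (s ++ t) = op (foldr op e s) (foldr op e t).
Proof. by elim: s => [|y s IH] /=; rewrite ?op1 // IH opA. Qed.

Lemma fprod_flatten ss : foldr op e (flatten ss) = foldr op e (map (foldr op e) ss).
Proof. by elim: ss => [|s ss IH] //=; rewrite fprod_cat IH. Qed.

Lemma fprod_comm x s : D x -> allP D s -> op x (foldr op e s) = op (foldr op e s) x.
Proof. move=> Dx Ds; apply: opC => //; exact: fprod_D. Qed.

Lemma fprod_mul U (f g : U -> T) (s : seq U) :
  allP (fun y => D (f y) /\ D (g y)) s ->
  foldr op e [seq op (f y) (g y) | y <- s] =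
  op (foldr op e (map f s)) (foldr op e (map g s)).
Proof.
elim: s => [|y s IH] /=; first by rewrite op1.
move/allP_cons=> [[D1 D2] H]; rewrite IH //.
have Dg : D (foldr op e (map g s)).
  by apply: fprod_D; apply/allP_map; apply: allP_imp H => z [].
have Df : D (foldr op e (map f s)).
  by apply: fprod_D; apply/allP_map; apply: allP_imp H => z [].
rewrite -!opA; congr (op _ _); rewrite !opA; congr (op _ _); exact: opC.
Qed.

Lemma fprod_swap I J (F : I -> J -> T) (s : seq I) (t : seq J) :
  allP (fun i => allP (fun j => D (F i j)) t) s ->
  foldr op e [seq foldr op e [seq F i j | j <- t] | i <- s] =
  foldr op e [seq foldr op e [seq F i j | i <- s] | j <- t].
Proof.
elim: s => [|i s IH] /=.
  move=> _; elim: t => [|j t IHt] //=; by rewrite op1 -IHt.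
move/allP_cons=> [H1 H2]; rewrite IH //.
rewrite fprod_mul //.
move=> j Hj; split; first exact: H1.
by apply: fprod_D; apply/allP_map=> i' Hi'; apply: (H2 i').
Qed.

End Comm.

Section Tree.
Variables (X : eqType) (x0 : X) (A B : tfun X -> Prop).
Hypothesis HAsub : subgroup A.
Hypothesis HAr : forall a, A a -> rooted a.
Hypothesis HBsub : subgroup B.
Hypothesis HBs : forall b, B b -> stab1 b.
Hypothesis Hb0 : forall b, B b -> section b [:: x0] = b.
Hypothesis HbA : forall b x, B b -> x != x0 -> A (section b [:: x]).
Hypothesis Hab : abelian_set A.
Hypothesis HAper : periodic_set A.

Notation sec g x := (section g [:: x]).

Lemma A_tid : A tid. Proof. by case: HAsub => _ []. Qed.
Lemma B_tid : B tid. Proof. by case: HBsub => _ []. Qed.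
Lemma A_mul a c : A a -> A c -> A (Defs.mul a c). Proof. by case: HAsub => _ [_ []] H _; apply: H. Qed.
Lemma B_mul a c : B a -> B c -> B (Defs.mul a c). Proof. by case: HBsub => _ [_ []] H _; apply: H. Qed.

Lemma A_cons a x v : A a -> a (x :: v) = act1 a x :: v.
Proof. by move/HAr=> [s [_ H]]; rewrite /act1 !H. Qed.
Lemma A_nil a : A a -> a [::] = [::].
Proof. by move/HAr=> [s [H _]]. Qed.
Lemma A_one a x : A a -> a [:: x] = [:: act1 a x].
Proof. exact: A_cons. Qed.

Lemma B_cons b x v : B b -> b (x :: v) = x :: sec b x v.
Proof.
move=> Bb; case: HBsub => /(_ b Bb) [_ [_ Hp]] _.
have := Hp [:: x] v; rewrite (HBs Bb) /= => Ht.
rewrite /section /=; case: (b (x :: v)) Ht => [|y t] //= [-> _].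
by rewrite drop0.
Qed.
Lemma B_nil b : B b -> b [::] = [::].
Proof.
move=> Bb; case: HBsub => /(_ b Bb) [_ [Hs _]] _.
exact: size0nil (Hs [::]).
Qed.

Lemma act1_mul a c y : A a -> A c -> act1 (Defs.mul a c) y = act1 c (act1 a y).
Proof. by move=> Aa Ac; rewrite /act1 /Defs.mul A_one // A_one. Qed.

Lemma act1_tid (y : X) : act1 tid y = y. Proof. by []. Qed.

Lemma A_inv a : A a -> exists a', [/\ A a', Defs.mul a a' = tid & Defs.mul a' a = tid].
Proof. by case: HAsub => _ [_ [_ H]] /H [a' [? []]]; exists a'. Qed.

Lemma act1_inj a : A a -> injective (act1 a).
Proof.
move=> Aa; have [a' [Aa' H _]] := A_inv Aa.
have K w : act1 a' (act1 a w) = w by rewrite -act1_mul // H.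
by move=> y z E; rewrite -(K y) E K.
Qed.

Lemma act1_comm a c y : A a -> A c -> act1 a (act1 c y) = act1 c (act1 a y).
Proof. by move=> Aa Ac; rewrite -!act1_mul // Hab. Qed.

Lemma pow_one a k y : A a -> iter k a [:: y] = [:: iter k (act1 a) y].
Proof. by move=> Aa; elim: k => //= k ->; rewrite A_one. Qed.

Lemma act1_pow a k y : A a -> act1 (pow a k) y = iter k (act1 a) y.
Proof. by move=> Aa; rewrite /act1 /pow pow_one. Qed.

Lemma iter_inj (f : X -> X) k : injective f -> injective (iter k f).
Proof. by move=> Hf; elim: k => //= k IH y z /Hf /IH. Qed.

Lemma iter_comm (f g : X -> X) k y : (forall z, f (g z) = g (f z)) ->
  iter k f (g y) = g (iter k f y).
Proof. by move=> H; elim: k => //= k ->. Qed.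

Definition Acomp (h : X -> X) := exists a, A a /\ forall y, h y = act1 a y.

Lemma Acomp_id : Acomp id. Proof. by exists tid; split=> //; exact: A_tid. Qed.
Lemma Acomp_comp h h' : Acomp h -> Acomp h' -> Acomp (h \o h').
Proof.
move=> [a [Aa Ha]] [c [Ac Hc]]; exists (Defs.mul c a); split; first exact: A_mul.
by move=> y; rewrite act1_mul //= Ha Hc.
Qed.
Lemma Acomp_inj h : Acomp h -> injective h.
Proof. by move=> [a [Aa Ha]] y z; rewrite !Ha; apply: act1_inj. Qed.
Lemma Acomp_comm h h' y : Acomp h -> Acomp h' -> h (h' y) = h' (h y).
Proof. by move=> [a [Aa Ha]] [c [Ac Hc]]; rewrite !Ha !Hc act1_comm. Qed.

Definition letter := (bool * tfun X)%type.
Definition valid (l : letter) := if l.1 then B l.2 else A l.2.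
Definition validW (w : seq letter) := allP valid w.
Definition eval (w : seq letter) : tfun X := prodl (map snd w).

Fixpoint lact (w : seq letter) (x : X) : X :=
  match w with [::] => x | l :: w' => lact w' (if l.1 then x else act1 l.2 x) end.

Fixpoint btr (w : seq letter) : seq (tfun X * (X -> X)) :=
  match w with
  | [::] => [::]
  | l :: w' => if l.1 then (l.2, id) :: btr w'
               else [seq (p.1, p.2 \o act1 l.2) | p <- btr w']
  end.

Definition E (p : tfun X * (X -> X)) (y : X) : letter :=
  (p.2 y == x0, sec p.1 (p.2 y)).

Definition secw w y := [seq E p y | p <- btr w].

Fixpoint rep n (w : seq letter) :=
  match n with 0 => [::] | n'.+1 => w ++ rep n' w end.

Definition apart (w : seq letter) := prodl [seq (if l.1 then tid else l.2) | l <- w].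
Definition Lam (w : seq letter) (a : tfun X) :=
  prodl [seq (if l.1 then lambda x0 l.2 a else tid) | l <- w].
Definition countB (w : seq letter) := count (fun l : letter => l.1) w.

Lemma validW_cons l w : validW (l :: w) <-> valid l /\ validW w.
Proof. exact: allP_cons. Qed.

Lemma eval_nil w : validW w -> eval w [::] = [::].
Proof.
elim: w => //= l w IH /validW_cons [Hl Hw].
rewrite /eval /= /Defs.mul; case: l Hl => [[]] g /= Hg.
  by rewrite B_nil //; exact: IH.
by rewrite A_nil //; exact: IH.
Qed.

Lemma eval_cons w x v : validW w ->
  eval w (x :: v) = lact w x :: eval (secw w x) v.
Proof.
elim: w x v => //= l w IH x v /validW_cons [Hl Hw].
rewrite /eval /= /Defs.mul; case: l Hl => [[]] g /= Hg.
  rewrite B_cons //; have := IH x (sec g x v) Hw; rewrite /eval => ->.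
  idtac.
  by rewrite /secw /= /E /=.
rewrite A_cons //; have := IH (act1 g x) v Hw; rewrite /eval => ->.
congr (_ :: _).
suff -> : secw ((false, g) :: w) x = secw w (act1 g x) by [].
by rewrite /secw /= -map_comp.
Qed.


Lemma btr_cat w1 w2 : btr (w1 ++ w2) = btr w1 ++ [seq (p.1, p.2 \o lact w1) | p <- btr w2].
Proof.
elim: w1 => [|[[] g] w1 IH] /=; first by elim: (btr w2) => //= -[b f] s <-.
  by rewrite IH.
by rewrite IH map_cat -!map_comp.
Qed.

Lemma secw_cat w1 w2 x : secw (w1 ++ w2) x = secw w1 x ++ secw w2 (lact w1 x).
Proof. by rewrite /secw btr_cat map_cat -map_comp. Qed.

Lemma lact_cat w1 w2 x : lact (w1 ++ w2) x = lact w2 (lact w1 x).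
Proof. by elim: w1 x => //= l w1 IH x; rewrite IH. Qed.

Lemma eval_cat w1 w2 u : eval (w1 ++ w2) u = eval w2 (eval w1 u).
Proof. by elim: w1 u => //= l w1 IH u; exact: IH. Qed.

Lemma rep_add m n w : rep (m + n) w = rep m w ++ rep n w.
Proof. by elim: m => //= m ->; rewrite catA. Qed.

Lemma rep_mul q l w : rep (q * l) w = rep q (rep l w).
Proof. by elim: q => //= q IH; rewrite mulSn rep_add IH. Qed.

Lemma lact_rep n w x : lact (rep n w) x = iter n (lact w) x.
Proof. by elim: n x => //= n IH x; rewrite lact_cat IH -iterSr. Qed.

Lemma eval_rep n w u : eval (rep n w) u = iter n (eval w) u.
Proof. by elim: n u => //= n IH u; rewrite eval_cat IH -iterSr. Qed.

Lemma secw_rep_fix q V x : lact V x = x -> secw (rep q V) x = rep q (secw V x).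
Proof. by move=> Hx; elim: q => //= q IH; rewrite secw_cat Hx IH. Qed.

Lemma secw_rep l w m x :
  secw (rep l w) (iter m (lact w) x) =
  flatten [seq secw w (iter i (lact w) x) | i <- iota m l].
Proof.
elim: l m => //= l IH m; rewrite secw_cat -iterS IH //.
Qed.

Lemma validW_cat w1 w2 : validW (w1 ++ w2) <-> validW w1 /\ validW w2.
Proof. exact: allP_cat. Qed.

Lemma validW_rep n w : validW w -> validW (rep n w).
Proof.
move=> Hw; elim: n => [|n IH] /=; first by move=> ? [].
by apply/validW_cat.
Qed.

Lemma btr_prop w : validW w -> allP (fun p => B p.1 /\ Acomp p.2) (btr w).
Proof.
elim: w => [|[[] g] w IH] /=; first by move=> _ ? [].
  move/validW_cons=> [Hg Hw]; apply/allP_cons; split; last exact: IH.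
  by split=> //; exact: Acomp_id.
move/validW_cons=> [Hg Hw]; apply/allP_map.
apply: allP_imp (IH Hw) => p [Bp Cp]; split=> //=.
apply: Acomp_comp Cp _; by exists g.
Qed.

Lemma E_valid p y : B p.1 -> valid (E p y).
Proof.
move=> Bp; rewrite /valid /E /=; case: eqP => [->|/eqP H].
  by rewrite Hb0.
exact: HbA.
Qed.

Lemma validW_secw w x : validW w -> validW (secw w x).
Proof.
move/btr_prop=> H; apply/allP_map; apply: allP_imp H => p [Bp _].
exact: E_valid.
Qed.

Lemma apart_A w : validW w -> A (apart w).
Proof.
elim: w => [|[[] g] w IH] /=; first by move=> _; exact: A_tid.
  by move/validW_cons=> [_ /IH].
by move/validW_cons=> [Hg /IH H]; apply: A_mul.
Qed.

Lemma lact_apart w y : validW w -> lact w y = act1 (apart w) y.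
Proof.
elim: w y => [|[[] g] w IH] y //=.
  by move/validW_cons=> [_ /IH].
move/validW_cons=> [Hg Hw]; rewrite IH // /apart /= act1_mul //.
exact: apart_A.
Qed.

Lemma countB_btr w : countB w = size (btr w).
Proof. by elim: w => [|[[] g] w IH] //=; rewrite ?size_map IH. Qed.

Lemma Lam_btr w a : Lam w a = prodl [seq lambda x0 p.1 a | p <- btr w].
Proof.
elim: w => [|[[] g] w IH] //=.
  by rewrite /Lam /= -/(Lam w a) IH.
by rewrite /Lam /= -/(Lam w a) IH -map_comp.
Qed.

Lemma olenP a y : A a ->
  [/\ 0 < orbit_len y a, iter (orbit_len y a) (act1 a) y = y &
      forall m, 0 < m -> iter m (act1 a) y = y -> orbit_len y a <= m].
Proof.
move=> Aa; rewrite /orbit_len; case: excluded_middle_informative => [h|h].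
  case: ex_minnP => m /andP [Hm /eqP Hf] Hmin; rewrite -act1_pow //; split=> //.
  by move=> k Hk Hk'; apply: Hmin; rewrite Hk /= act1_pow // Hk'.
exfalso; apply: h; have [n [Hn Hp]] := HAper Aa.
by exists n; rewrite Hn /= Hp.
Qed.

Section Orb.
Variables (a : tfun X) (y : X).
Hypothesis Aa : A a.
Local Notation s := (act1 a).
Local Notation l := (orbit_len y a).

Lemma iter_per q : iter (q * l) s y = y.
Proof.
have [_ H _] := olenP y Aa.
by elim: q => //= q IH; rewrite mulSn iterD IH H.
Qed.

Lemma ol_mod m : iter m s y = iter (m %% l) s y.
Proof. by rewrite {1}(divn_eq m l) addnC iterD iter_per. Qed.

Lemma ol_dvd m : iter m s y = y <-> l %| m.
Proof.
have [H0 H1 H2] := olenP y Aa.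
split=> [Hm|/dvdnP [q ->]]; last exact: iter_per.
rewrite /dvdn; apply/eqP; move: Hm; rewrite ol_mod.
case: (posnP (m %% l)) => // Hp /(H2 _ Hp).
by rewrite leqNgt ltn_pmod.
Qed.

Lemma ol_distinct i j : i < l -> j < l -> iter i s y = iter j s y -> i = j.
Proof.
have Hinj k : injective (iter k s) by apply: iter_inj; exact: act1_inj.
wlog Hij : i j / i <= j.
  move=> W Hi Hj E; case: (leqP i j) => H; first exact: W.
  by symmetry; apply: W => //; exact: ltnW.
move=> Hi Hj; rewrite -(subnK Hij) iterD => E.
have E' : iter (j - i) s (iter i s y) = iter i s (iter (j - i) s y).
  by rewrite -!iterD addnC.
move: E; rewrite E' => /Hinj /esym /ol_dvd Hd.
have : j - i < l by apply: leq_ltn_trans Hj; exact: leq_subr.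
case: (posnP (j - i)) => [->|Hp] //.
by move=> Hlt; move: (dvdn_leq Hp Hd); rewrite leqNgt Hlt.
Qed.

End Orb.

Lemma ol_conj a (p : X -> X) y : A a -> injective p -> (forall z, p (act1 a z) = act1 a (p z)) ->
  orbit_len (p y) a = orbit_len y a.
Proof.
move=> Aa Hi Hc.
have Hm m : iter m (act1 a) (p y) = p (iter m (act1 a) y).
  by elim: m => //= m ->; rewrite Hc.
have [H0 H1 H2] := olenP y Aa; have [H0' H1' H2'] := olenP (p y) Aa.
apply/anti_leq/andP; split.
  by apply: H2' => //; rewrite Hm H1.
by apply: H2 => //; apply: Hi; rewrite -Hm.
Qed.

Lemma ol_iter a m y : A a -> orbit_len (iter m (act1 a) y) a = orbit_len y a.
Proof.
move=> Aa; apply: ol_conj => //; first by apply: iter_inj; exact: act1_inj.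
by move=> z; rewrite -iterSr.
Qed.

Lemma ol_dvd_n a n y : A a -> pow a n = tid -> orbit_len y a %| n.
Proof.
move=> Aa Hp; apply/ol_dvd => //.
by rewrite -act1_pow // Hp.
Qed.

Definition G b z := if z == x0 then tid else sec b z.

Lemma G_A b z : B b -> A (G b z).
Proof. by move=> Bb; rewrite /G; case: eqP => [_|/eqP]; [exact: A_tid|exact: HbA]. Qed.

Lemma lambda_G a b : A a ->
  lambda x0 b a = prodl [seq G b (iter i (act1 a) x0) | i <- iota 0 (orbit_len x0 a)].
Proof.
move=> Aa; have [H0 H1 H2] := olenP x0 Aa.
rewrite /lambda; case E: (orbit_len x0 a) H0 => [|l] // _ /=.
rewrite /G eqxx; have -> : forall P : tfun X, Defs.mul tid P = P by [].
congr prodl; apply/eq_in_map => i /=.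
rewrite mem_iota => /andP [Hi1 Hi2]; rewrite act1_pow //.
case: eqP => [Hf|] //; exfalso; have := H2 i Hi1 Hf; rewrite E.
by rewrite add1n ltnS in Hi2; rewrite leqNgt ltnS Hi2.
Qed.

Lemma tmulA (f g h : tfun X) : Defs.mul f (Defs.mul g h) = Defs.mul (Defs.mul f g) h.
Proof. by []. Qed.
Lemma tmul1 (f : tfun X) : Defs.mul tid f = f. Proof. by []. Qed.
Lemma tmulr1 (f : tfun X) : Defs.mul f tid = f. Proof. by []. Qed.

Lemma prodl_cat (s t : seq (tfun X)) : prodl (s ++ t) = Defs.mul (prodl s) (prodl t).
Proof. exact: (@fprod_cat _ _ _ tmulA tmul1). Qed.

Lemma prodl_A s : allP A s -> A (prodl s).
Proof. exact: (@fprod_D _ _ _ A A_tid A_mul). Qed.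

Lemma prodl_flatten (ss : seq (seq (tfun X))) : prodl (flatten ss) = prodl (map (@prodl X) ss).
Proof. exact: (@fprod_flatten _ _ _ tmulA tmul1). Qed.

Lemma prodl_swap I J (F : I -> J -> tfun X) (s : seq I) (t : seq J) :
  allP (fun i => allP (fun j => A (F i j)) t) s ->
  prodl [seq prodl [seq F i j | j <- t] | i <- s] =
  prodl [seq prodl [seq F i j | i <- s] | j <- t].
Proof.
exact: (@fprod_swap _ _ _ A tmulA tmul1 (fun x y Hx Hy => Hab Hx Hy) A_tid A_mul).
Qed.

Lemma sumn_swap I J (F : I -> J -> nat) (s : seq I) (t : seq J) :
  sumn [seq sumn [seq F i j | j <- t] | i <- s] =
  sumn [seq sumn [seq F i j | i <- s] | j <- t].
Proof.
apply: (@fprod_swap _ addn 0 (fun _ => True) addnA add0n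
          (fun x y _ _ => addnC x y) Logic.I (fun _ _ _ _ => Logic.I)).
by move=> i _ j _.
Qed.

Lemma count_sumn U (P : pred U) s : count P s = sumn [seq nat_of_bool (P y) | y <- s].
Proof. by elim: s => //= y s ->. Qed.

Lemma map_ext_In U V (f g : U -> V) s : (forall y, List.In y s -> f y = g y) -> map f s = map g s.
Proof.
elim: s => //= y s IH H; rewrite H; last by left.
by rewrite IH // => z Hz; apply: H; right.
Qed.

Lemma prod_ifpow (P : pred nat) (v : tfun X) s :
  prodl [seq (if P i then v else tid) | i <- s] = pow v (count P s).
Proof.
elim: s => //= i s ->; case: (P i) => //=.
by apply: functional_extensionality => u; rewrite /pow /Defs.mul /= -iterSr.
Qed.

Lemma sumn_le1 U (f : U -> nat) s : allP (fun y => f y <= 1) s ->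
  sumn (map f s) <= size s /\ (sumn (map f s) = size s -> allP (fun y => f y = 1) s).
Proof.
elim: s => [|y s IH] /=; first by split=> // _ ? [].
move/allP_cons=> [Hy Hs]; have [H1 H2] := IH Hs; split.
  by rewrite -add1n leq_add.
move=> E; apply/allP_cons.
have Ey : f y = 1 by lia.
split=> //; apply: H2; lia.
Qed.

Lemma In_mem (T : eqType) (y : T) s : List.In y s -> y \in s.
Proof. by elim: s => //= z s IH [->|/IH]; rewrite inE ?eqxx // => ->; rewrite orbT. Qed.

Lemma lambda_A b c : B b -> A c -> A (lambda x0 b c).
Proof.
move=> Bb Ac; rewrite lambda_G //; apply: prodl_A; apply/allP_map => i _.
exact: G_A.
Qed.

Lemma iota_shift m n : iota m n = map (addn m) (iota 0 n).
Proof. by rewrite -iotaDl addn0. Qed.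

Lemma prodl_rot a (Ga : X -> tfun X) u i0 : A a -> (forall z, A (Ga z)) ->
  i0 < orbit_len u a -> iter i0 (act1 a) u = x0 ->
  prodl [seq Ga (iter i (act1 a) u) | i <- iota 0 (orbit_len u a)] =
  prodl [seq Ga (iter i (act1 a) x0) | i <- iota 0 (orbit_len x0 a)].
Proof.
move=> Aa HG Hi0 Hx0; have El : orbit_len x0 a = orbit_len u a by rewrite -Hx0 ol_iter.
have [_ Hper _] := olenP u Aa.
rewrite El; set l := orbit_len u a.
have Hl : l = i0 + (l - i0) by rewrite subnKC // ltnW.
rewrite {1}Hl iotaD map_cat prodl_cat add0n.
rewrite [in RHS](_ : l = (l - i0) + i0); last by rewrite addnC -Hl.
rewrite iotaD map_cat prodl_cat add0n.
rewrite (iota_shift i0) (iota_shift (l - i0)).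
have -> : [seq Ga (iter i (act1 a) u) | i <- map (addn i0) (iota 0 (l - i0))] =
          [seq Ga (iter i (act1 a) x0) | i <- iota 0 (l - i0)].
  by rewrite -map_comp; apply: eq_map => i /=; rewrite addnC iterD Hx0.
have -> : [seq Ga (iter i (act1 a) x0) | i <- map (addn (l - i0)) (iota 0 i0)] =
          [seq Ga (iter i (act1 a) u) | i <- iota 0 i0].
  rewrite -map_comp; apply: eq_map => i /=; rewrite -Hx0 -iterD.
  by rewrite (_ : l - i0 + i + i0 = i + l) ?iterD ?Hper //; lia.
apply: Hab; apply: prodl_A; apply/allP_map => ? _; exact: HG.
Qed.

Section Sx.
Variables (w : seq letter) (x : X).
Hypothesis Hw : validW w.
Local Notation a := (apart w).
Local Notation s := (act1 (apart w)).
Local Notation l := (orbit_len x (apart w)).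
Local Notation K := (btr w).

Definition Sx := secw (rep l w) x.

Lemma Aa : A a. Proof. exact: apart_A. Qed.

Lemma iter_lact i y : iter i (lact w) y = iter i s y.
Proof. by elim: i => //= i ->; rewrite lact_apart. Qed.

Lemma Sx_flat : Sx = flatten [seq [seq E p (iter i s x) | p <- K] | i <- iota 0 l].
Proof.
rewrite /Sx -[x in secw _ x]/(iter 0 (lact w) x) secw_rep.
by congr flatten; apply: eq_map => i; rewrite /secw iter_lact.
Qed.

Lemma Sx_valid : validW Sx.
Proof. by apply: validW_secw; apply: validW_rep. Qed.

Lemma Sx_allP (P : letter -> Prop) :
  (forall i p, i < l -> List.In p K -> P (E p (iter i s x))) -> allP P Sx.
Proof.
move=> H; rewrite Sx_flat; apply/allP_flatten/allP_map => i /In_mem.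
rewrite mem_iota add0n => /andP [_ Hi]; apply/allP_map => p Hp; exact: H.
Qed.

Lemma Kp : allP (fun p => B p.1 /\ Acomp p.2) K.
Proof. exact: btr_prop. Qed.

Lemma Acomp_s : Acomp s. Proof. by exists a; split=> //; exact: Aa. Qed.

Lemma pos_unique p i j : List.In p K -> i < l -> j < l ->
  p.2 (iter i s x) = p.2 (iter j s x) -> i = j.
Proof.
move=> Hp Hi Hj /(Acomp_inj (proj2 (Kp Hp))) E.
exact: (ol_distinct Aa Hi Hj E).
Qed.

Lemma cnt_eq1 p i0 : List.In p K -> i0 < l -> p.2 (iter i0 s x) = x0 ->
  count (fun i => p.2 (iter i s x) == x0) (iota 0 l) = 1.
Proof.
move=> Hp Hi0 E.
rewrite (@eq_in_count _ _ (pred1 i0)) ?count_uniq_mem ?iota_uniq ?mem_iota ?Hi0 //.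
move=> i; rewrite mem_iota add0n => /andP [_ Hi] /=.
apply/eqP/eqP => [H|->] //; apply: (pos_unique Hp Hi Hi0); by rewrite H E.
Qed.

Lemma cnt_le1 p : List.In p K -> count (fun i => p.2 (iter i s x) == x0) (iota 0 l) <= 1.
Proof.
move=> Hp; case: (boolP (has (fun i => p.2 (iter i s x) == x0) (iota 0 l))).
  by case/hasP => i; rewrite mem_iota add0n => /andP [_ Hi] /eqP E; rewrite (cnt_eq1 Hp Hi E).
by rewrite has_count -leqNgt leqn0 => /eqP ->.
Qed.

Lemma countB_Sx : countB Sx = sumn [seq count (fun i => p.2 (iter i s x) == x0) (iota 0 l) | p <- K].
Proof.
rewrite Sx_flat /countB count_flatten -map_comp.
rewrite (eq_map (g := fun i => sumn [seq nat_of_bool (p.2 (iter i s x) == x0) | p <- K])); last first.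
  by move=> i /=; rewrite count_map count_sumn.
rewrite sumn_swap; congr sumn; apply: eq_map => p; by rewrite count_sumn.
Qed.

Definition allpos := forall p, List.In p K -> exists2 i, i < l & p.2 (iter i s x) = x0.

Lemma Sx_count : countB Sx <= countB w /\ (countB Sx = countB w -> allpos).
Proof.
have H := @sumn_le1 _ (fun p => count (fun i => p.2 (iter i s x) == x0) (iota 0 l)) K.
have [H1 H2] : _ := H (fun p Hp => cnt_le1 Hp).
rewrite countB_Sx countB_btr; split=> // /H2 Hc p Hp.
have := Hc p Hp => /eqP; rewrite eqn_leq => /andP [_]; rewrite -has_count.
by case/hasP => i; rewrite mem_iota add0n => /andP [_ Hi] /eqP E; exists i.
Qed.

Lemma apart_Sx : allpos -> apart Sx = Lam w a.
Proof.
move=> Hpos; rewrite /apart Sx_flat map_flatten prodl_flatten.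
transitivity (prodl [seq prodl [seq G p.1 (p.2 (iter i s x)) | p <- K] | i <- iota 0 l]).
  by rewrite -!map_comp; congr prodl; apply: eq_map => i /=; rewrite -map_comp.
rewrite prodl_swap; last first.
  move=> i _; apply: allP_imp Kp => p [Bp _]; exact: G_A.
rewrite Lam_btr; congr prodl; apply: map_ext_In => p Hp.
have [Bp Cp] := Kp Hp; have [i0 Hi0 E0] := Hpos p Hp.
have Hc y : p.2 (act1 a y) = act1 a (p.2 y) by exact: Acomp_comm Cp Acomp_s.
have Hcs i : p.2 (iter i s x) = iter i s (p.2 x) by rewrite iter_comm.
rewrite lambda_G; last exact: Aa.
have El : orbit_len (p.2 x) a = l by apply: ol_conj => //; [exact: Aa|exact: Acomp_inj].
rewrite -(prodl_rot (a := a) (Ga := G p.1) (u := p.2 x) (i0 := i0)); last first.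
- by rewrite -Hcs.
- by rewrite El.
- by move=> z; exact: G_A.
- exact: Aa.
by rewrite El; congr prodl; apply: eq_map => i; rewrite Hcs.
Qed.

Lemma Lam_Sx : allpos -> forall c, A c -> Lam Sx c = Lam w c.
Proof.
move=> Hpos c Ac; rewrite [Lam Sx c]/Lam Sx_flat map_flatten prodl_flatten.
set F := fun i (p : tfun X * (X -> X)) =>
  if p.2 (iter i s x) == x0 then lambda x0 (sec p.1 (p.2 (iter i s x))) c else tid.
transitivity (prodl [seq prodl [seq F i p | p <- K] | i <- iota 0 l]).
  by rewrite -!map_comp; congr prodl; apply: eq_map => i /=; rewrite -map_comp.
rewrite prodl_swap; last first.
  move=> i _; apply: allP_imp Kp => p [Bp _]; rewrite /F.
  by case: eqP => [->|_]; [rewrite Hb0 //; exact: lambda_A|exact: A_tid].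
rewrite Lam_btr; congr prodl; apply: map_ext_In => p Hp.
have [Bp Cp] := Kp Hp; have [i0 Hi0 E0] := Hpos p Hp.
rewrite (eq_map (g := fun i => if p.2 (iter i s x) == x0 then lambda x0 p.1 c else tid)).
  by rewrite prod_ifpow (cnt_eq1 Hp Hi0 E0).
by move=> i; rewrite /F; case: eqP => [->|] //; rewrite Hb0.
Qed.

Lemma Bonly_Sx : a = tid -> allpos -> allP (fun l => l.1 = true /\ B l.2) Sx.
Proof.
move=> Ha Hpos; apply: Sx_allP => i p Hi Hp.
have Hid j y : iter j s y = y by rewrite Ha; elim: j => //= j ->.
have [Bp _] := Kp Hp; have [i0 _] := Hpos p Hp; rewrite !Hid => E0.
by rewrite /E /= E0 eqxx Hb0.
Qed.

End Sx.

Definition perw w := exists N, 0 < N /\ forall u, eval (rep N w) u = u.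

Lemma iter_mulid (g : tfun X) N : (forall u, iter N g u = u) -> forall t u, iter (N * t) g u = u.
Proof.
move=> H; elim=> [|t IH] u; first by rewrite muln0.
by rewrite mulnS iterD IH H.
Qed.

Lemma iter_dvdid (g : tfun X) N q : (forall u, iter N g u = u) -> N %| q -> forall u, iter q g u = u.
Proof. by move=> H /dvdnP [t ->] u; rewrite mulnC; apply: iter_mulid. Qed.

Lemma pow_mul_comm (g h : tfun X) m : Defs.mul g h = Defs.mul h g ->
  pow (Defs.mul g h) m = Defs.mul (pow g m) (pow h m).
Proof.
move=> C; have C' u : h (g u) = g (h u) by have := congr1 (fun f => f u) C.
have Cm k u : g (iter k h u) = iter k h (g u) by elim: k => //= k <-; rewrite C'.
apply: functional_extensionality => u; rewrite /pow /Defs.mul.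
elim: m => //= m ->; rewrite -Cm.
by rewrite C'.
Qed.

Lemma pow_tid m : pow (@tid X) m = tid.
Proof. by apply: functional_extensionality => u; rewrite /pow; elim: m => //= m ->. Qed.

Section Per.
Variables (e : nat) (Te : tfun X -> seq X).
Hypothesis He : 0 < e.
Hypothesis HTe : forall b, B b -> forall z, z \notin Te b -> z != x0 /\ pow (sec b z) e = tid.

Lemma prodl_pow_e s : allP (fun g => A g /\ pow g e = tid) s -> pow (prodl s) e = tid.
Proof.
elim: s => [|g s IH] /=; first by move=> _; exact: pow_tid.
move/allP_cons=> [[Ag Hg] Hs]; rewrite pow_mul_comm; last first.
  by apply: Hab => //; apply: prodl_A; apply: allP_imp Hs => ? [].
by rewrite Hg IH.
Qed.

Lemma common_mult (L : seq X) (P : X -> nat -> Prop) :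
  (forall z, z \in L -> exists N, 0 < N /\ P z N) ->
  exists M, 0 < M /\ forall z, z \in L -> exists N, [/\ 0 < N, P z N & N %| M].
Proof.
elim: L => [|y L IH] H; first by exists 1.
have [M [HM HL]] : exists M, 0 < M /\ forall z, z \in L -> exists N, [/\ 0 < N, P z N & N %| M].
  by apply: IH => z Hz; apply: H; rewrite inE Hz orbT.
have [N [HN HP]] := H y (mem_head _ _).
exists (M * N); split; first by rewrite muln_gt0 HM.
move=> z; rewrite inE => /orP [/eqP ->|Hz].
  by exists N; split=> //; exact: dvdn_mull.
by have [N' [? ? ?]] := HL z Hz; exists N'; split=> //; exact: dvdn_mulr.
Qed.

Lemma iter_B b m z v : B b -> iter m b (z :: v) = z :: iter m (sec b z) v.
Proof. by move=> Bb; elim: m => //= m ->; rewrite B_cons. Qed.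

Lemma B_per b : B b -> exists N, 0 < N /\ forall u, iter N b u = u.
Proof.
move=> Bb.
have [M [HM HL]] := @common_mult (Te b) (fun z N => z != x0 -> forall u, iter N (sec b z) u = u)
  (fun z _ => match boolP (z == x0) with
    | AltTrue H => ex_intro _ 1 (conj erefl (fun H' => False_ind _ (negP H' H)))
    | AltFalse H => let '(ex_intro N (conj HN HP)) := HAper (HbA Bb H) in
                    ex_intro _ N (conj HN (fun _ u => congr1 (fun f => f u) HP))
    end).
exists (M * e); split; first by rewrite muln_gt0 HM He.
elim=> [|z v IH]; first by elim: (M * e) => //= k ->; rewrite B_nil.
rewrite iter_B //; congr (_ :: _).
case: (eqVneq z x0) => [->|Hz]; first by rewrite Hb0.
case: (boolP (z \in Te b)) => Hzt.
  have [N [_ HN Hd]] := HL z Hzt; apply: (iter_dvdid (HN Hz)); exact: dvdn_mulr.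
have [_ Hp] := HTe Bb Hzt; apply: (iter_dvdid (N := e)) _ _.
  by move=> u; have := congr1 (fun f => f u) Hp.
exact: dvdn_mull.
Qed.

Lemma Bword_per W : allP (fun l => B l.2) W -> perw W.
Proof.
move=> H; have BW : B (eval W).
  apply: (@fprod_D _ _ _ B B_tid B_mul); apply/allP_map; exact: H.
have [N [HN HI]] := B_per BW; exists N; split=> // u; by rewrite eval_rep.
Qed.

Lemma cover1 (f : X -> X) (L : seq X) : injective f -> exists F : seq X, forall y, f y \in L -> y \in F.
Proof.
move=> Hf; elim: L => [|t L [F HF]]; first by exists [::].
case: (classic (exists y, f y = t)) => [[y0 Hy0]|Hn].
  exists (y0 :: F) => y; rewrite inE => /orP [/eqP E|/HF]; last by rewrite inE orbC => ->.
  by rewrite inE (Hf y y0) ?eqxx // E Hy0.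
exists F => y; rewrite inE => /orP [/eqP E|/HF] //; exfalso; apply: Hn; by exists y.
Qed.

Lemma cover_list U (P : U -> X -> Prop) s :
  (forall q, List.In q s -> exists F : seq X, forall y, P q y -> y \in F) ->
  exists F : seq X, forall q y, List.In q s -> P q y -> y \in F.
Proof.
elim: s => [|q s IH] H; first by exists [::].
have [F1 H1] := H q (or_introl erefl).
have [F2 H2] := IH (fun q' Hq' => H q' (or_intror Hq')).
exists (F1 ++ F2) => q' y [<-|Hq'] Hy; rewrite mem_cat.
  by rewrite H1.
by rewrite (H2 q') // orbT.
Qed.

Lemma cover_nat (P : nat -> X -> Prop) n :
  (forall i, i < n -> exists F : seq X, forall y, P i y -> y \in F) ->
  exists F : seq X, forall i y, i < n -> P i y -> y \in F.
Proof.
elim: n => [|n IH] H; first by exists [::].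
have [F1 H1] := IH (fun i Hi => H i (ltnW Hi)).
have [F2 H2] := H n (leqnn _).
exists (F1 ++ F2) => i y; rewrite ltnS leq_eqVlt => /orP [/eqP ->|Hi] Hy; rewrite mem_cat.
  by rewrite H2 ?orbT.
by rewrite (H1 i).
Qed.

Lemma combine W : validW W -> (forall x, perw (Sx W x)) -> perw W.
Proof.
move=> Hw Hper.
have Aa := Aa Hw; set a := apart W in Aa *.
have [n [Hn Hpn]] := HAper Aa.
have [F HF] : exists F : seq X, forall y i p, i < n -> List.In p (btr W) ->
    p.2 (iter i (act1 a) y) \in Te p.1 -> y \in F.
  pose P i y := exists2 p, List.In p (btr W) & p.2 (iter i (act1 a) y) \in Te p.1.
  have Hc : forall i, i < n -> exists F : seq X, forall y, P i y -> y \in F.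
    move=> i _.
    have Hc' : forall p, List.In p (btr W) -> exists F : seq X,
        forall y, p.2 (iter i (act1 a) y) \in Te p.1 -> y \in F.
      move=> p Hp; apply: cover1; apply: (@inj_comp _ _ _ p.2).
        by apply: Acomp_inj; have [_ ?] := Kp Hw Hp.
      by apply: iter_inj; exact: act1_inj.
    have [F HF] := cover_list Hc'.
    by exists F => y [p Hp Hy]; exact: (HF p).
  have [F HF] := cover_nat Hc.
  by exists F => y i p Hi Hp Hy; apply: (HF i) => //; exists p.
have [M [HM HMF]] := @common_mult F (fun x N => forall u, eval (rep N (Sx W x)) u = u)
  (fun x _ => Hper x).
exists (n * (M * e)); split; first by rewrite !muln_gt0 Hn HM He.
case=> [|x v]; first by apply: eval_nil; apply: validW_rep.
rewrite eval_cons; last exact: validW_rep.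
set l := orbit_len x a.
have Hln : l %| n by exact: ol_dvd_n.
have El : n * (M * e) = (n %/ l * (M * e)) * l by rewrite mulnAC divnK.
congr (_ :: _).
  rewrite lact_rep iter_lact //; apply/ol_dvd => //; exact: dvdn_mulr.
rewrite El rep_mul secw_rep_fix; last by rewrite lact_rep iter_lact //; apply/ol_dvd.
rewrite eval_rep -/(Sx W x).
case: (boolP (x \in F)) => HxF.
  have [N [_ HN Hd]] := HMF x HxF.
  apply: (iter_dvdid (N := N)).
    by move=> u; rewrite -eval_rep.
  by apply: dvdn_mull; apply: dvdn_mulr.
have Hall : allP (fun g => A g /\ pow g e = tid) (map snd (Sx W x)).
  apply/allP_map; apply: Sx_allP => // i p Hi Hp.
  have Hin : i < n by apply: leq_trans Hi (dvdn_leq Hn Hln).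
  have [Bp _] := Kp Hw Hp.
  have Hz : p.2 (iter i (act1 a) x) \notin Te p.1.
    by apply: contra HxF; exact: HF.
  have [Hz0 Hpe] := HTe Bp Hz.
  by rewrite /E /=; split; [exact: (HbA Bp Hz0)|exact: Hpe].
have Hpe := prodl_pow_e Hall.
apply: (iter_dvdid (N := e)).
  by move=> u; have := congr1 (fun f => f u) Hpe.
by apply: dvdn_mull; apply: dvdn_mull.
Qed.


Lemma sec_mulB b c z : B b -> B c -> sec (Defs.mul b c) z = Defs.mul (sec b z) (sec c z).
Proof.
move=> Bb Bc; apply: functional_extensionality => v.
rewrite /section /Defs.mul /= (@B_cons b z v Bb) /=.
by rewrite drop0.
Qed.

Lemma G_mul b c z : B b -> B c -> G (Defs.mul b c) z = Defs.mul (G b z) (G c z).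
Proof. by move=> Bb Bc; rewrite /G; case: eqP => // _; rewrite sec_mulB. Qed.

Lemma lambda_mul b c c' : B b -> B c -> A c' ->
  lambda x0 (Defs.mul b c) c' = Defs.mul (lambda x0 b c') (lambda x0 c c').
Proof.
move=> Bb Bc Ac; rewrite !lambda_G //.
rewrite (eq_map (g := fun i => Defs.mul (G b (iter i (act1 c') x0)) (G c (iter i (act1 c') x0)))).
  apply: (@fprod_mul _ _ _ A tmulA tmul1 (fun x y Hx Hy => Hab Hx Hy) A_tid A_mul).
  by move=> i _; split; exact: G_A.
by move=> i; rewrite G_mul.
Qed.

Lemma lambda_tid c' : A c' -> lambda x0 tid c' = tid.
Proof.
move=> Ac; rewrite lambda_G //.
elim: (iota 0 _) => //= i s ->; rewrite /G; case: eqP => // _.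
by apply: functional_extensionality => v; rewrite /section /Defs.mul /= drop0.
Qed.

Lemma lambda_prod bs c' : allP B bs -> A c' ->
  lambda x0 (prodl bs) c' = prodl [seq lambda x0 b c' | b <- bs].
Proof.
move=> Hb Ac; elim: bs Hb => [|b bs IH] /=; first by move=> _; exact: lambda_tid.
move/allP_cons=> [Bb Hbs]; rewrite lambda_mul // ?IH //.
exact: (@fprod_D _ _ _ B B_tid B_mul).
Qed.

Lemma beta_B W : validW W -> B (prodl [seq p.1 | p <- btr W]).
Proof.
move=> Hw; apply: (@fprod_D _ _ _ B B_tid B_mul); apply/allP_map.
by apply: allP_imp (btr_prop Hw) => p [].
Qed.

Lemma Lam_beta W c : validW W -> A c -> Lam W c = lambda x0 (prodl [seq p.1 | p <- btr W]) c.
Proof.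
move=> Hw Ac; rewrite Lam_btr lambda_prod // -?map_comp //.
by apply/allP_map; apply: allP_imp (btr_prop Hw) => p [].
Qed.

Lemma per_all : (forall b, B b -> forall c, A c -> exists n, iter n (lambda x0 b) c = tid) ->
  forall W, validW W -> perw W.
Proof.
move=> Hlam W Hw.
suff H : forall k W, validW W -> countB W = k -> perw W by apply: (H _ W Hw).
elim/ltn_ind => k IHk {}W {}Hw Hk.
set beta := prodl [seq p.1 | p <- btr W].
have Bbeta : B beta by exact: beta_B.
set f := lambda x0 beta.
have [n Hn] := Hlam beta Bbeta (apart W) (apart_A Hw).
suff Inner : forall n W', validW W' -> countB W' = k -> (forall c, A c -> Lam W' c = f c) ->
    iter n f (apart W') = tid -> perw W'.
  apply: (Inner n W Hw Hk) => //; move=> c Ac; exact: Lam_beta.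
elim=> [|m IHm] W' Hw' Hk' Hf Hit; apply: combine => // x.
all: have [Hle Heq] := Sx_count x Hw'.
all: have Sv : validW (Sx W' x) by apply: Sx_valid.
all: case: (ltnP (countB (Sx W' x)) k) => Hlt; first exact: (IHk _ Hlt _ Sv erefl).
all: have Heq' : countB (Sx W' x) = countB W' by apply/eqP; rewrite eqn_leq Hle Hk' Hlt.
  by apply: Bword_per; apply: allP_imp (Bonly_Sx Hw' Hit (Heq Heq')) => ? [].
have Hpos := Heq Heq'.
apply: (IHm _ Sv).
- by rewrite Heq' Hk'.
- by move=> c Ac; rewrite Lam_Sx // Hf.
- rewrite apart_Sx // Hf; last exact: apart_A.
  by rewrite -iterSr.
Qed.

End Per.

Lemma flatten_single U (f : nat -> U) s : flatten [seq [:: f i] | i <- s] = map f s.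
Proof. by elim: s => //= i s ->. Qed.

Lemma lambda_per : periodic_set (gen (fun g => A g \/ B g)) ->
  forall b, B b -> forall c, A c -> exists n, iter n (lambda x0 b) c = tid.
Proof.
move=> HG b Bb.
suff H : forall N c, A c -> 0 < N -> pow (Defs.mul b c) N = tid ->
    exists n, iter n (lambda x0 b) c = tid.
  move=> c Ac; have [N [HN HP]] := HG _ (genM (or_intror Bb) (genM (or_introl Ac) (gen1 _))).
  exact: H HN HP.
elim/ltn_ind => N IH c Ac HN HP.
pose w : seq letter := [:: (true, b); (false, c)].
have Hw : validW w.
  by apply/validW_cons; split => //; apply/validW_cons; split=> // ? [].
have Hrep u : eval (rep N w) u = u.
  by rewrite eval_rep; have := congr1 (fun f => f u) HP.
have Ha : apart w = c by [].
have [Hl0 Hl1 Hl2] := olenP x0 Ac.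
have Hlw i y : iter i (lact w) y = iter i (act1 c) y by rewrite iter_lact.
have Hfix : lact (rep N w) x0 = x0.
  by have := Hrep [:: x0]; rewrite eval_cons; [case|exact: validW_rep].
rewrite lact_rep Hlw in Hfix.
have HlN : orbit_len x0 c %| N by apply/ol_dvd.
case: (leqP (orbit_len x0 c) 1) => Hl1'.
  exists 1; rewrite /= /lambda.
  by have -> : orbit_len x0 c = 1 by apply/eqP; rewrite eqn_leq Hl1' Hl0.
set l := orbit_len x0 c in Hl0 Hl1 Hl2 HlN Hl1' *.
set q := N %/ l.
have HNq : N = q * l by rewrite divnK.
have Hq0 : 0 < q by move: HN; rewrite HNq muln_gt0 => /andP [].
have HqN : q < N by rewrite HNq ltn_Pmulr.
have HS : forall v, iter q (eval (Sx w x0)) v = v.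
  move=> v; have := Hrep (x0 :: v); rewrite eval_cons; last exact: validW_rep.
  move=> -[_].
  rewrite HNq rep_mul secw_rep_fix; last by rewrite lact_rep Hlw.
  by rewrite eval_rep.
have ES : eval (Sx w x0) = Defs.mul b (lambda x0 b c).
  rewrite /eval (Sx_flat x0 Hw) /=.
  rewrite (flatten_single (fun i => E (b, id) (iter i (act1 (apart w)) x0))) -map_comp.
  rewrite Ha -/l.
  have El : l = l.-1.+1 by rewrite prednK.
  rewrite El /= /E /= Hb0 //; congr (Defs.mul b _).
  rewrite /lambda -/l /=; congr prodl; apply: eq_map => i /=; by rewrite act1_pow.
have Hq : pow (Defs.mul b (lambda x0 b c)) q = tid.
  by apply: functional_extensionality => v; rewrite /pow -ES HS.
have [n Hn] := IH q HqN (lambda x0 b c) (lambda_A Bb Ac) Hq0 Hq.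
by exists n.+1; rewrite iterSr.
Qed.

Lemma gen_word g : gen (fun g => A g \/ B g) g -> exists W, validW W /\ g = eval W.
Proof.
elim=> [|g0 h Hg _ [W [Hw ->]]|g0 g' h Hg C1 C2 _ [W [Hw ->]]].
- by exists [::]; split=> // ? [].
- case: Hg => Hg.
    by exists ((false, g0) :: W); split=> //; apply/validW_cons.
  by exists ((true, g0) :: W); split=> //; apply/validW_cons.
- have inv_eq (H : tfun X -> Prop) : subgroup H -> H g0 -> H g'.
    move=> [_ [_ [_ Hinv]]] /Hinv [g'' [Hg'' [E1 _]]].
    suff -> : g' = g'' by [].
    apply: functional_extensionality => v.
    by rewrite -{2}(C2 v); have := congr1 (fun f => f (g' v)) E1.
  case: Hg => Hg.
    by exists ((false, g') :: W); split=> //; apply/validW_cons; split=> //; exact: inv_eq.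
  by exists ((true, g') :: W); split=> //; apply/validW_cons; split=> //; exact: inv_eq.
Qed.
End Tree.

Theorem mainTheorem10 (X : eqType) (x0 : X) (A B : tfun X -> Prop) :
  CS_group x0 A B -> abelian_set A -> periodic_set A ->
  (finite_exponent A \/ finite_support x0 B) ->
  (periodic_set (gen (fun g => A g \/ B g)) <->
   forall b, B b -> forall a, A a ->
     exists n, iter n (lambda x0 b) a = tid).
Proof.
move=> [[HAsub HAr _ HBsub HBs] [Hb0 HbA _]] Hab HAper Hfin.
have [e [Te [He HTe]]] : exists e (Te : tfun X -> seq X), 0 < e /\
    forall b, B b -> forall z, z \notin Te b -> z != x0 /\ pow (section b [:: z]) e = tid.
  case: Hfin => [[n [Hn HnA]]|Hsup].
    exists n, (fun _ => [:: x0]); split=> // b Bb z; rewrite inE => Hz; split=> //.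
    by apply: HnA; exact: HbA.
  pose Q b (s : seq X) := forall x, x != x0 -> x \notin s -> section b [:: x] = tid.
  exists 1, (fun b => x0 :: epsilon (inhabits [::]) (Q b)).
  split=> // b Bb z; rewrite inE negb_or => /andP [Hz Hzs]; split=> //.
  have HQ := epsilon_spec (inhabits [::]) (Q b) (Hsup b Bb).
  by rewrite HQ // pow_tid.
split.
- move=> HG b Bb a Aa.
  exact: (lambda_per HAsub HAr HBsub HBs Hb0 HbA HAper HG Bb Aa).
- move=> Hlam g /(gen_word HAsub HBsub) [W [Hw ->]].
  have [N [HN HP]] := per_all HAsub HAr HBsub HBs Hb0 HbA Hab HAper He HTe Hlam Hw.
  exists N; split=> //; apply: functional_extensionality => u.
  by rewrite /pow -eval_rep HP.
Qed.
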